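(* In the setting described in the context, suppose there exists $\mathbf{w}\in S_m$ with $f(\mathbf{w})>0$. Then for any $\mathbf{w}_0=(w_1',\ldots,w_m')^T\in S_m$ with $0<w_i'<1$ for each $i$, $f(\mathbf{w}_0)>0$.
   Context: Given a model matrix $\mathbf{X}\in\mathbb{R}^{m\times p}$ (rows $\mathbf{q}(\mathbf{x}_i)^T$ for distinct design points under a generalized linear model, $m\ge2$, $p\ge2$) and numbers $\nu_1,\ldots,\nu_m\ge0$ (where $\nu_i=(\partial\mu_i/\partial\eta_i)^2/\mathrm{Var}(Y_i)$), let $S_m=\{\mathbf{w}\in\mathbb{R}^m:w_i\ge0,\sum_iw_i=1\}$, and for $\mathbf{w}\in S_m$ let $\mathbf{W}=\mathrm{diag}\{w_1\nu_1,\ldots,w_m\nu_m\}$ and $f(\mathbf{w})=|\mathbf{X}^T\mathbf{W}\mathbf{X}|$. *)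

(* Defs.v *)
From mathcomp Require Import all_boot all_order all_algebra.
Set Implicit Arguments. Unset Strict Implicit. Unset Printing Implicit Defensive.
Import Order.TTheory GRing.Theory Num.Theory.
Local Open Scope ring_scope.

Definition in_simplex (R : realFieldType) (m : nat) (w : 'I_m -> R) : Prop :=
  (forall i, 0 <= w i) /\ \sum_(i < m) w i = 1.

Definition Wmat (R : realFieldType) (m : nat) (w nu : 'I_m -> R) : 'M[R]_m :=
  diag_mx (\row_i (w i * nu i)).

Definition fdet (R : realFieldType) (m p : nat) (X : 'M[R]_(m, p))
  (nu w : 'I_m -> R) : R :=
  \det (X^T *m Wmat w nu *m X).

(* Main.v *)
Require Import Defs.
From mathcomp Require Import all_boot all_order all_algebra ring.
Import Order.TTheory GRing.Theory Num.Theory.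
Local Open Scope ring_scope.

Lemma pd_det_pos (R : realFieldType) n (A : 'M[R]_n) : A^T = A ->
  (forall u : 'rV_n, u != 0 -> 0 < (u *m A *m u^T) 0 0) -> 0 < \det A.
Proof.
elim: n A => [|n IH] A0 sA0 pA0; first by rewrite det_mx00.
suff key : forall (a : 'M[R]_1) (b : 'M[R]_(1, n)) c D,
  let A := block_mx a b c D in A^T = A ->
  (forall u : 'rV_(1 + n), u != 0 -> 0 < (u *m A *m u^T) 0 0) -> 0 < \det A.
  by have := key (ulsubmx (A0 : 'M_(1 + n))) (ursubmx (A0 : 'M_(1 + n)))
   (dlsubmx (A0 : 'M_(1 + n))) (drsubmx (A0 : 'M_(1 + n))); rewrite submxK; apply.
move=> a b c D A sA pA.
have := sA; rewrite /A tr_block_mx => /eq_block_mx [_ _ hc hD].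
have ha : a = (a 0 0)%:M by apply: mx11_scalar.
set a0 := a 0 0 in ha *.
have a0pos : 0 < a0.
  have := pA (row_mx 1 0); rewrite row_mx_eq0 oner_eq0 /= => /(_ isT).
  by rewrite mul_row_block !mul1mx !mul0mx !addr0 tr_row_mx mul_row_col
    trmx1 trmx0 mulmx1 mulmx0 addr0.
pose K := - (a0^-1 *: c).
pose S := K *m b + D.
pose E := block_mx (1%:M : 'M_1) 0 K 1%:M.
have hE : E *m A *m E^T = block_mx a 0 0 S.
  rewrite /A /E tr_block_mx !mulmx_block !trmx1 !trmx0 !mul1mx !mul0mx !mulmx1 !mulmx0
    ?addr0 ?add0r.
  have h1 : K *m a + c = 0.
    by rewrite ha mul_mx_scalar /K scalerN scalerA mulfV ?gt_eqF // scale1r addNr.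
  have h2 : a *m K^T + b = 0.
    by rewrite ha mul_scalar_mx /K linearN /= linearZ /= -hc trmxK scalerN scalerA mulfV ?gt_eqF // scale1r addNr.
  by rewrite h1 h2 mul0mx add0r.
have dE : \det E = 1 by rewrite /E det_lblock !det1 mulr1.
have -> : \det A = a0 * \det S.
  have := congr1 determinant hE.
  by rewrite !det_mulmx det_tr dE mul1r mulr1 det_ublock det_mx11.
apply: mulr_gt0 => //; apply: IH.
  rewrite /S linearD /= hD trmx_mul /K linearN /= linearZ /= -hc trmxK.
  by rewrite mulmxN mulNmx -scalemxAl -scalemxAr.
move=> v v0.
have hu : row_mx 0 v *m E = row_mx (v *m K) v.
  by rewrite /E mul_row_block !mul0mx !add0r mulmx1.
have := pA (row_mx 0 v *m E).
rewrite [X in X != 0]hu row_mx_eq0 (negbTE v0) andbF => /(_ isT).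
rewrite trmx_mul !mulmxA -(mulmxA _ E) -(mulmxA _ (E *m A)) hE.
rewrite mul_row_block !mul0mx !mulmx0 ?add0r ?addr0 tr_row_mx mul_row_col.
by rewrite mul0mx add0r.
Qed.

Lemma quadE (R : realFieldType) (m p : nat) (X : 'M[R]_(m, p)) (nu w : 'I_m -> R)
  (u : 'rV_p) :
  (u *m (X^T *m Wmat w nu *m X) *m u^T) 0 0 =
  \sum_i w i * nu i * ((u *m X^T) 0 i) ^+ 2.
Proof.
have hX : X *m u^T = (u *m X^T)^T by rewrite trmx_mul trmxK.
rewrite !mulmxA -(mulmxA _ X) hX.
set y := u *m X^T.
have yE : u *m X^T = y by [].
clearbody y.
rewrite /Wmat mul_mx_diag mxE; apply: eq_bigr => i _.
by rewrite !mxE expr2; ring.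
Qed.

Theorem lemma5 (R : realFieldType) (m p : nat) (X : 'M[R]_(m, p))
  (nu : 'I_m -> R) :
  (2 <= m)%N -> (2 <= p)%N ->
  (forall i, 0 <= nu i) ->
  (exists w : 'I_m -> R, in_simplex w /\ 0 < fdet X nu w) ->
  forall w0 : 'I_m -> R, in_simplex w0 -> (forall i, 0 < w0 i < 1) ->
  0 < fdet X nu w0.
Proof.
move=> _ _ nu0 [w [[w0' _] hdet]] w0 _ hw0.
rewrite /fdet; apply: pd_det_pos.
  by rewrite !trmx_mul trmxK /Wmat tr_diag_mx mulmxA.
move=> u u0; rewrite quadE; set y := u *m X^T.
have yE : u *m X^T = y by [].
clearbody y.
have tge0 : forall (v : 'I_m -> R) i, 0 <= v i -> 0 <= v i * nu i * y 0 i ^+ 2.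
  by move=> v i vi; apply: mulr_ge0; [apply: mulr_ge0 | apply: sqr_ge0].
have Qpos : 0 < \sum_i w i * nu i * y 0 i ^+ 2.
  rewrite lt_def sumr_ge0 ?andbT; last by move=> i _; apply: tge0.
  apply/eqP => Q0.
  have t0 := psumr_eq0P (fun i _ => tge0 w i (w0' i)) Q0.
  have yW : y *m Wmat w nu = 0.
    apply/matrixP => k j; rewrite /Wmat mul_mx_diag !mxE.
    rewrite ord1; have /eqP := t0 j isT; rewrite expr2 mulrA mulf_eq0.
    case/orP => /eqP h; last by rewrite h mul0r.
    by rewrite mulrC h.
  have uM : u *m (X^T *m Wmat w nu *m X) = 0 by rewrite !mulmxA yE yW mul0mx.
  have unit : X^T *m Wmat w nu *m X \in unitmx by rewrite unitmxE unitfE gt_eqF.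
  move/eqP: u0; apply; rewrite -(mulmxK unit u) uM mul0mx.
  done.
case: (pickP (fun i => 0 < w i * nu i * y 0 i ^+ 2)) => [i /= ti | H]; last first.
  move: Qpos; rewrite big1 ?ltxx // => i _.
  by apply/le_anti; rewrite leNgt H tge0.
rewrite (bigD1 i) //=; apply: (@lt_le_trans _ _ (w0 i * nu i * y 0 i ^+ 2)).
  have h2 : 0 < nu i * y 0 i ^+ 2.
    rewrite lt_def mulr_ge0 ?sqr_ge0 // andbT; move: ti; rewrite -mulrA; apply: contraTneq => ->.
    by rewrite mulr0 ltxx.
  rewrite -mulrA mulr_gt0 //; by case/andP: (hw0 i).
rewrite lerDl sumr_ge0 // => k _; apply: tge0.
by case/andP: (hw0 k) => /ltW.
Qed.
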